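(* Let $X$ be a separable Banach space and $G$ be a topological group acting continuously on $X$ by linear isometries. There exists an equivalent $G$-invariant strictly convex norm on $X$ if and only if there are a countable dense sequence $(x_n)_{n\in\mathbb{N}}\subseteq X$, a constant $C>0$, and linear $G$-equivariant maps $T_n:X\to Z_n$, $n\in\mathbb{N}$, such that for each $n$: $Z_n$ is a strictly convex Banach space equipped with an action of $G$ by linear isometries, $\|T_n\|\leq 1$, and $\|T_n(x_n)\|\geq C\|x_n\|$.
   Context: A norm $\|\cdot\|'$ on $X$ is $G$-invariant if $\|g\cdot x\|'=\|x\|'$ for all $g\in G$, $x\in X$; a linear map $T$ is $G$-equivariant if $T(g\cdot x)=g\cdot T(x)$. A norm is strictly convex if for every $x\neq y$ with $\|x\|=\|y\|$ one has $\|\frac{x+y}{2}\|<\|x\|$. *)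

(* Defs.v *)
From HB Require Import structures.
From mathcomp Require Import all_boot all_order all_algebra.
From mathcomp Require Import all_classical all_reals all_analysis.
Set Implicit Arguments. Unset Strict Implicit. Unset Printing Implicit Defensive.
Import Order.TTheory GRing.Theory Num.Theory.
Import numFieldNormedType.Exports.
Local Open Scope classical_set_scope.
Local Open Scope ring_scope.

Definition is_topological_group (G : topologicalType)
  (mul : G -> G -> G) (one : G) (inv : G -> G) : Prop :=
  [/\ (forall a b c, mul a (mul b c) = mul (mul a b) c),
      (forall a, mul one a = a /\ mul a one = a),
      (forall a, mul (inv a) a = one /\ mul a (inv a) = one),
      continuous (fun p : G * G => mul p.1 p.2) &
      continuous inv].

Definition is_linear_isometric_action (R : realType) (G : Type)
  (mul : G -> G -> G) (one : G) (V : normedModType R) (act : G -> V -> V) : Prop :=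
  [/\ (forall x, act one x = x),
      (forall g h x, act (mul g h) x = act g (act h x)),
      (forall g (a : R) x y, act g (a *: x + y) = a *: act g x + act g y) &
      (forall g x, `|act g x| = `|x|)].

Definition continuous_action (R : realType) (G : topologicalType)
  (V : normedModType R) (act : G -> V -> V) : Prop :=
  continuous (fun p : G * V => act p.1 p.2).

Definition separable (T : topologicalType) : Prop :=
  exists u : nat -> T, dense (range u).

Definition is_norm (R : realType) (V : normedModType R) (N : V -> R) : Prop :=
  [/\ (forall x, N x = 0 -> x = 0),
      (forall (a : R) x, N (a *: x) = `|a| * N x) &
      (forall x y, N (x + y) <= N x + N y)].

Definition equivalent_norm (R : realType) (V : normedModType R) (N : V -> R) : Prop :=
  exists a b : R, [/\ 0 < a, 0 < b &
    forall x, a * `|x| <= N x /\ N x <= b * `|x|].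

Definition strictly_convex_fun (R : realType) (V : normedModType R) (N : V -> R) : Prop :=
  forall x y : V, x <> y -> N x = N y -> N (2^-1 *: (x + y)) < N x.

Definition strictly_convex_space (R : realType) (V : normedModType R) : Prop :=
  strictly_convex_fun (fun x : V => `|x|).

Definition G_invariant (G : Type) (V : Type) (R : realType)
  (act : G -> V -> V) (N : V -> R) : Prop :=
  forall g x, N (act g x) = N x.

(* Main.v *)
Require Import Defs.
From HB Require Import structures.
From mathcomp Require Import all_boot all_order all_algebra.
From mathcomp Require Import all_classical all_reals all_analysis.
From mathcomp Require Import ring lra.
Import Order.TTheory GRing.Theory Num.Theory.
Import numFieldNormedType.Exports.
Local Open Scope classical_set_scope.
Local Open Scope ring_scope.

Definition XN (R : realType) (X : completeNormedModType R) (N : X -> R)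
  (hN : is_norm N) (hE : equivalent_norm N) : Type := X.
Arguments XN {R X N}.

Section Renorm.
Variables (R : realType) (X : completeNormedModType R) (N : X -> R).
Variable hN : is_norm N.
Variable hE : equivalent_norm N.

Local Notation XN := (XN hN hE).
HB.instance Definition _ := GRing.Lmodule.on XN.

Let ND : forall x y : XN, N (x + y) <= N x + N y.
Proof. by case: hN. Qed.
Let NZ : forall (l : R) (x : XN), N (l *: x) = `|l| * N x.
Proof. by case: hN. Qed.
Let N0 : forall x : XN, N x = 0 -> x = 0.
Proof. by case: hN. Qed.

HB.instance Definition _ := Lmodule_isNormed.Build R XN ND NZ N0.

Lemma XN_normE (x : XN) : `|x| = N x.
Proof. by []. Qed.

Let XN_complete : forall (F : set_system XN), ProperFilter F -> cauchy F -> cvg F.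
Proof.
move=> F FF /cauchyP cF.
have FF' : ProperFilter (F : set_system X) := FF.
case: hE => a [b [a0 b0 hab]].
have : cauchy (F : set_system X).
  apply: (@cauchy_exP R X F) => e e0.
  have [x Fx] := cF (a * e) (mulr_gt0 a0 e0).
  exists x; apply: filterS Fx => y.
  rewrite /ball /= => hy.
  have hy2 : N ((x : X) - y) < a * e := hy.
  change (ball (x:X) e y); rewrite -ball_normE /=.
  rewrite -(ltr_pM2l a0); apply: le_lt_trans hy2.
  by case: (hab (x - y)).
move=> /(@cauchy_cvg X) /cvg_ex [l Fl] /=.
apply: (@cvgP XN F (l : XN)).
apply/fcvgrPdist_lt => e e0.
have := (@fcvgrPdist_lt R X F FF' l).1 Fl (e / b) (divr_gt0 e0 b0).
apply: filterS => y hy.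
change (N (l - y) < e).
apply: (le_lt_trans (hab (l - y)).2).
by rewrite mulrC -ltr_pdivlMr.
Qed.
HB.instance Definition _ := Uniform_isComplete.Build XN XN_complete.
End Renorm.

Definition TN (R : realType) (X : completeNormedModType R) (N : X -> R)
  (hN : is_norm N) (hE : equivalent_norm N) (c : R) (v : X) : XN hN hE := c *: v.
Arguments TN {R X N}.

Lemma TN_linear (R : realType) (X : completeNormedModType R) (N : X -> R)
  (hN : is_norm N) (hE : equivalent_norm N) (c : R) : linear (TN hN hE c).
Proof. by move=> a u v; rewrite /TN scalerDr scalerA mulrC -scalerA. Qed.

HB.instance Definition _ (R : realType) (X : completeNormedModType R) (N : X -> R)
  (hN : is_norm N) (hE : equivalent_norm N) (c : R) :=
  GRing.isLinear.Build R X (XN hN hE) _ (TN hN hE c) (@TN_linear R X N hN hE c).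

Lemma forward_dir (R : realType) (X : completeNormedModType R)
  (G : topologicalType) (mul : G -> G -> G) (one : G)
  (act : G -> X -> X) :
  separable X ->
  is_linear_isometric_action mul one act ->
  (exists N : X -> R,
      [/\ is_norm N, equivalent_norm N, G_invariant act N & strictly_convex_fun N]) ->
  (exists (x : nat -> X) (C : R) (Z : nat -> completeNormedModType R)
          (actZ : forall n, G -> Z n -> Z n)
          (T : forall n, {linear X -> Z n}),
      [/\ dense (range x), 0 < C &
       forall n,
         [/\ strictly_convex_space (Z n),
             is_linear_isometric_action mul one (actZ n),
             (forall g v, T n (act g v) = actZ n g (T n v)),
             (forall v, `|T n v| <= `|v|) &
             C * `|x n| <= `|T n (x n)|]]).
Proof.
move=> [u du] [a1 aM aL aI] [N [hN hE hG hS]].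
have hE' := hE; case: hE' => a [b [a0 b0 hab]].
exists u, (a / b), (fun _ => XN hN hE), (fun _ => act : G -> XN hN hE -> XN hN hE).
exists (fun _ => (TN hN hE b^-1 : {linear X -> XN hN hE})).
split => //; first exact: divr_gt0.
move=> n; split => //.
- move=> g v; change (b^-1 *: act g v = act g (b^-1 *: v)).
  have h0 : act g 0 = 0 by apply/normr0_eq0; rewrite aI normr0.
  by rewrite -[b^-1 *: v]addr0 aL h0 !addr0.
- move=> v; have [_ hZ _] := hN.
  change (N (b^-1 *: v) <= `|v|).
  rewrite hZ gtr0_norm ?invr_gt0 // mulrC ler_pdivrMr // mulrC.
  by case: (hab v).
- have [_ hZ _] := hN.
  change (a / b * `|u n| <= N (b^-1 *: u n)).
  rewrite hZ gtr0_norm ?invr_gt0 // mulrAC [b^-1 * _]mulrC.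
  by rewrite ler_wpM2r ?invr_ge0 ?(ltW b0) //; case: (hab (u n)).
Qed.

Set Implicit Arguments. Unset Strict Implicit.

Section Sums.
Variable R : realType.

Definition summ (f : nat -> R) :=
  (forall i, 0 <= f i) /\ exists K : R, 0 <= K /\ forall i, f i <= K / (2 ^ i.+1)%:R.

Definition sumR (f : nat -> R) : R := fine (\sum_(i <oo) (f i)%:E)%E.

Lemma summE f : summ f ->
  (\sum_(i <oo) (f i)%:E)%E = (sumR f)%:E /\ 0 <= sumR f.
Proof.
move=> [f0 [K [K0 fK]]].
have s0 : (0 <= \sum_(i <oo) (f i)%:E)%E.
  by apply: nneseries_ge0 => i _ _; rewrite lee_fin.
have sK : (\sum_(i <oo) (f i)%:E <= K%:E)%E.
  apply: le_trans (epsilon_trick0 xpredT K0).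
  by apply: lee_nneseries => i *; rewrite lee_fin ?fK //; apply: f0.
have fin : (\sum_(i <oo) (f i)%:E)%E \is a fin_num.
  by rewrite ge0_fin_numE // (le_lt_trans sK) // ltry.
rewrite /sumR fineK //; split => //.
by rewrite -lee_fin fineK.
Qed.

Lemma summ_bound f K : (forall i, 0 <= f i) -> 0 <= K ->
  (forall i, f i <= K / (2 ^ i.+1)%:R) -> sumR f <= K.
Proof.
move=> f0 K0 fK.
have sf : summ f by split => //; exists K.
have [e _] := summE sf.
rewrite -lee_fin -e.
apply: le_trans (epsilon_trick0 xpredT K0).
by apply: lee_nneseries => i *; rewrite lee_fin ?fK //; apply: f0.
Qed.

Lemma summD f g : summ f -> summ g -> summ (fun i => f i + g i).
Proof.
move=> [f0 [K [K0 fK]]] [g0 [L [L0 gL]]]; split; first by move=> i; rewrite addr_ge0.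
exists (K + L); split; first by rewrite addr_ge0.
by move=> i; rewrite mulrDl lerD.
Qed.

Lemma summZ c f : 0 <= c -> summ f -> summ (fun i => c * f i).
Proof.
move=> c0 [f0 [K [K0 fK]]]; split; first by move=> i; rewrite mulr_ge0.
exists (c * K); split; first by rewrite mulr_ge0.
by move=> i; rewrite -mulrA ler_wpM2l.
Qed.

Lemma summ_le f g : (forall i, 0 <= f i) -> (forall i, f i <= g i) -> summ g -> summ f.
Proof.
move=> f0 fg [g0 [K [K0 gK]]]; split => //; exists K; split => // i.
exact: le_trans (fg i) (gK i).
Qed.

Lemma sumRD f g : summ f -> summ g -> sumR (fun i => f i + g i) = sumR f + sumR g.
Proof.
move=> sf sg; have sfg := summD sf sg.
have [ef _] := summE sf; have [eg _] := summE sg; have [efg _] := summE sfg.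
apply/eqP; rewrite -eqe -efg EFinD -ef -eg.
under eq_eseriesr do rewrite EFinD.
rewrite nneseriesD // => i _ _; rewrite lee_fin; [case: sf | case: sg] => h _; exact: h.
Qed.

Lemma sumRZ c f : 0 <= c -> summ f -> sumR (fun i => c * f i) = c * sumR f.
Proof.
move=> c0 sf; have scf := summZ c0 sf.
have [ef _] := summE sf; have [ecf _] := summE scf.
apply/eqP; rewrite -eqe -ecf EFinM -ef.
under eq_eseriesr do rewrite EFinM.
rewrite nneseriesZl // => i _; rewrite lee_fin; case: sf => h _; exact: h.
Qed.

Lemma sumR_le f g : (forall i, 0 <= f i) -> (forall i, f i <= g i) -> summ g ->
  sumR f <= sumR g.
Proof.
move=> f0 fg sg; have sf := summ_le f0 fg sg.
have [ef _] := summE sf; have [eg _] := summE sg.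
rewrite -lee_fin -ef -eg.
by apply: lee_nneseries => i *; rewrite lee_fin ?fg //; apply: f0.
Qed.

Lemma sumR_ge f k : summ f -> f k <= sumR f.
Proof.
move=> sf; have [ef _] := summE sf.
rewrite -lee_fin -ef.
apply: le_trans (nneseries_lim_ge k.+1 _); last first.
  by move=> i _ _; rewrite lee_fin; case: sf => h _; exact: h.
rewrite big_nat_recr //= leeDr // sume_ge0 // => i _; rewrite lee_fin.
by case: sf => h _; exact: h.
Qed.

Lemma sumR_ge0 f : summ f -> 0 <= sumR f.
Proof. by move=> /summE []. Qed.

End Sums.

Lemma keyineq (F : realType) (a b c t : F) : 0 <= a -> 0 <= b -> 0 <= c -> c <= a + b -> 0 < t ->
  c ^+ 2 <= (1 + t) * a ^+ 2 + (1 + t^-1) * b ^+ 2.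
Proof.
move=> a0 b0 c0 cab t0.
have s0 : 0 < t^-1 by rewrite invr_gt0.
have ts : t * t^-1 = 1 by rewrite mulfV // gt_eqF.
set s := t^-1 in s0 ts *.
have h1 : c ^+ 2 <= (a + b) ^+ 2 by rewrite ler_pXn2r // ?nnegrE ?addr_ge0.
have h2 : 0 <= s * (t * a - b) ^+ 2 by rewrite mulr_ge0 // ?sqr_ge0 ?ltW.
have e : s * (t * a - b) ^+ 2 - (t * a ^+ 2 - 2 * a * b + s * b ^+ 2) = (t * s - 1) * (t * a ^+ 2 - 2 * a * b).
  ring.
rewrite ts subrr mul0r in e.
have e2 : s * (t * a - b) ^+ 2 = t * a ^+ 2 - 2 * a * b + s * b ^+ 2.
  by apply/eqP; rewrite -subr_eq0 e.
rewrite e2 in h2.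
lra.
Qed.

Lemma midineq (F : realType) (a b c : F) : 0 <= a -> 0 <= b -> 0 <= c -> c <= (a + b) / 2 ->
  c ^+ 2 <= (a ^+ 2 + b ^+ 2) / 2.
Proof.
move=> a0 b0 c0 h.
have h1 : c ^+ 2 <= ((a + b) / 2) ^+ 2 by rewrite ler_pXn2r // ?nnegrE ?divr_ge0 ?addr_ge0.
have h2 : 0 <= (a - b) ^+ 2 by rewrite sqr_ge0.
have e : ((a + b) / 2) ^+ 2 = (a ^+ 2 + b ^+ 2) / 2 - (a - b) ^+ 2 / 4.
  by field.
lra.
Qed.

Lemma midineq_lt (F : realType) (a b c : F) : 0 <= a -> 0 <= b -> 0 <= c -> c <= (a + b) / 2 ->
  a != b -> c ^+ 2 < (a ^+ 2 + b ^+ 2) / 2.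
Proof.
move=> a0 b0 c0 h ab.
have h1 : c ^+ 2 <= ((a + b) / 2) ^+ 2 by rewrite ler_pXn2r // ?nnegrE ?divr_ge0 ?addr_ge0.
have h2 : 0 < (a - b) ^+ 2 by rewrite lt_def sqr_ge0 andbT expf_neq0 // subr_eq0.
have e : ((a + b) / 2) ^+ 2 = (a ^+ 2 + b ^+ 2) / 2 - (a - b) ^+ 2 / 4.
  by field.
lra.
Qed.

Section Back.
Variables (R : realType) (X : completeNormedModType R) (G : Type)
  (mul : G -> G -> G) (one : G) (act : G -> X -> X)
  (x : nat -> X) (C : R) (Z : nat -> completeNormedModType R)
  (actZ : forall n, G -> Z n -> Z n) (T : forall n, {linear X -> Z n}).
Hypothesis aX : is_linear_isometric_action mul one act.
Hypothesis dx : dense (range x).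
Hypothesis C0 : 0 < C.
Hypothesis sZ : forall n : nat, strictly_convex_space (Z n).
Hypothesis aZ : forall n : nat, is_linear_isometric_action mul one (@actZ n).
Hypothesis eqT : forall (n : nat) g v, T n (act g v) = @actZ n g (T n v).
Hypothesis nT : forall (n : nat) v, `|T n v| <= `|v|.
Hypothesis cT : forall n : nat, C * `|x n| <= `|T n (x n)|.

Definition w (v : X) (i : nat) : R := `|T i v| ^+ 2 / (2 ^ i.+1)%:R.

Let D_gt0 i : 0 < (2 ^ i.+1)%:R :> R.
Proof. by rewrite ltr0n expn_gt0. Qed.

Let Dinv_ge0 i : 0 <= ((2 ^ i.+1)%:R : R)^-1.
Proof. by rewrite invr_ge0 ltW. Qed.

Lemma w_ge0 v i : 0 <= w v i.
Proof. by rewrite /w divr_ge0 // ?sqr_ge0 // ltW. Qed.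

Lemma summ_w v : summ (w v).
Proof.
split; first exact: w_ge0.
exists (`|v| ^+ 2); split; first exact: sqr_ge0.
move=> i; rewrite /w ler_wpM2r // ler_pXn2r // ?nnegrE //.
Qed.

Definition Q v := sumR (w v).
Definition M v := `|v| ^+ 2 + Q v.
Definition Nn v := Num.sqrt (M v).

Lemma Q_ge0 v : 0 <= Q v.
Proof. exact: sumR_ge0 (summ_w v). Qed.

Lemma Q_le v : Q v <= `|v| ^+ 2.
Proof.
apply: summ_bound; [exact: w_ge0 | exact: sqr_ge0 |].
by move=> i; rewrite /w ler_wpM2r // ler_pXn2r // ?nnegrE.
Qed.

Lemma M_ge0 v : 0 <= M v.
Proof. by rewrite /M addr_ge0 ?sqr_ge0 ?Q_ge0. Qed.

Lemma QZ a v : Q (a *: v) = a ^+ 2 * Q v.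
Proof.
rewrite /Q -(sumRZ (sqr_ge0 a) (summ_w v)); congr sumR; apply/funext => i.
rewrite /w linearZ /= normrZ exprMn real_normK ?mulrA //; exact: num_real.
Qed.

Lemma Qact g v : Q (act g v) = Q v.
Proof.
rewrite /Q; congr sumR; apply/funext => i.
by rewrite /w eqT; case: (aZ i) => _ _ _ ->.
Qed.

Lemma Qtri u v t : 0 < t -> Q (u + v) <= (1 + t) * Q u + (1 + t^-1) * Q v.
Proof.
move=> t0.
have t1 : 0 <= 1 + t by rewrite addr_ge0 // ltW.
have t2 : 0 <= 1 + t^-1 by rewrite addr_ge0 // invr_ge0 ltW.
rewrite /Q -(sumRZ t1 (summ_w u)) -(sumRZ t2 (summ_w v)) -(sumRD (summZ t1 (summ_w u)) (summZ t2 (summ_w v))).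
apply: sumR_le; [exact: w_ge0| |exact: (summD (summZ t1 (summ_w u)) (summZ t2 (summ_w v)))].
move=> i.
have h : `|T i (u + v)| <= `|T i u| + `|T i v| by rewrite linearD /=; exact: ler_normD.
have k := keyineq (normr_ge0 (T i u)) (normr_ge0 (T i v)) (normr_ge0 _) h t0.
rewrite /w; apply: le_trans (ler_wpM2r (Dinv_ge0 i) k) _.
by rewrite mulrDl !mulrA.
Qed.

Lemma Mtri u v t : 0 < t -> M (u + v) <= (1 + t) * M u + (1 + t^-1) * M v.
Proof.
move=> t0; rewrite /M.
have h1 := Qtri u v t0.
have h2 : `|u + v| ^+ 2 <= (1 + t) * `|u| ^+ 2 + (1 + t^-1) * `|v| ^+ 2.
  by apply: keyineq => //; exact: ler_normD.
lra.
Qed.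

Lemma Nn_ge0 v : 0 <= Nn v.
Proof. exact: sqrtr_ge0. Qed.

Lemma NnK v : Nn v ^+ 2 = M v.
Proof. by rewrite /Nn sqr_sqrtr // M_ge0. Qed.

Lemma Nn_eq0 v : Nn v = 0 -> v = 0.
Proof.
move=> /eqP; rewrite /Nn sqrtr_eq0 /M => h.
have h1 := Q_ge0 v; have h2 : `|v| ^+ 2 = 0.
  by apply/eqP; rewrite eq_le sqr_ge0 andbT; lra.
by apply/normr0_eq0/eqP; rewrite -[_ == 0](expf_eq0 _ 2) h2.
Qed.

Lemma NnZ a v : Nn (a *: v) = `|a| * Nn v.
Proof.
rewrite /Nn /M QZ normrZ exprMn real_normK ?num_real // -mulrDr.
by rewrite sqrtrM ?sqr_ge0 // sqrtr_sqr.
Qed.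

Lemma Nn0 : Nn 0 = 0.
Proof. by rewrite -(scale0r (0 : X)) NnZ normr0 mul0r. Qed.

Lemma Nn_tri u v : Nn (u + v) <= Nn u + Nn v.
Proof.
have [u0|u0] := eqVneq (Nn u) 0; first by rewrite (Nn_eq0 u0) add0r Nn0 add0r.
have [v0|v0] := eqVneq (Nn v) 0; first by rewrite (Nn_eq0 v0) addr0 Nn0 addr0.
have up : 0 < Nn u by rewrite lt_def u0 Nn_ge0.
have vp : 0 < Nn v by rewrite lt_def v0 Nn_ge0.
have t0 : 0 < Nn v / Nn u by rewrite divr_gt0.
have h := Mtri u v t0.
rewrite -NnK -(NnK u) -(NnK v) in h.
have e : (1 + Nn v / Nn u) * Nn u ^+ 2 + (1 + (Nn v / Nn u)^-1) * Nn v ^+ 2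
    = (Nn u + Nn v) ^+ 2 by field; rewrite u0 v0.
rewrite e in h.
rewrite -(ger0_norm (addr_ge0 (Nn_ge0 u) (Nn_ge0 v))) -sqrtr_sqr /Nn.
by rewrite ler_sqrt ?sqr_ge0 // -NnK.
Qed.

Lemma Nn_equiv v : `|v| <= Nn v /\ Nn v <= 2 * `|v|.
Proof.
have h1 := Q_ge0 v; have h2 := Q_le v.
split.
  rewrite -(normr_id v) -sqrtr_sqr /Nn ler_sqrt ?M_ge0 // /M; lra.
rewrite -(ger0_norm (mulr_ge0 (ler0n _ 2) (normr_ge0 v))) -sqrtr_sqr /Nn.
rewrite ler_sqrt ?sqr_ge0 // /M exprMn.
have h3 := sqr_ge0 `|v|.
have e : (2 : R) ^+ 2 = 4 by rewrite expr2; lra.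
rewrite e; lra.
Qed.

Lemma Nn_act g v : Nn (act g v) = Nn v.
Proof. by rewrite /Nn /M Qact; case: aX => _ _ _ ->. Qed.

Lemma sepT u v : u != v -> exists k, T k u != T k v.
Proof.
move=> uv; have [//|hn] := pselect (exists k, T k u != T k v).
exfalso.
have hk k : T k (u - v) = 0.
  rewrite linearB /=; apply/eqP; rewrite subr_eq0; apply/negPn/negP => ne.
  by apply: hn; exists k.
have dn0 : u - v != 0 by rewrite subr_eq0.
set d := u - v in hk dn0.
have d0 : 0 < `|d| by rewrite normr_gt0.
set e := C * `|d| / (C + 1).
have Cp1 : 0 < C + 1 by rewrite addr_gt0.
have e0 : 0 < e by rewrite /e divr_gt0 // mulr_gt0.
have ee : e * (C + 1) = C * `|d| by rewrite /e mulfVK // gt_eqF.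
have [z [bz [n _ xnz]]] : ball d e `&` range x !=set0.
  by apply: dx; [exists d; exact: ballxx | exact: ball_open].
rewrite -xnz -ball_normE /ball_ /= in bz.
have h1 := cT n.
have h2 : `|T n (x n)| <= `|x n - d|.
  by rewrite -[T n (x n)]subr0 -(hk n) -linearB /=; exact: nT.
have h3 : `|x n - d| = `|d - x n| by rewrite distrC.
have h4 : `|d| <= `|d - x n| + `|x n|.
  by rewrite -[X in `|X|](subrK (x n)) ler_normD.
have h5 : C * `|d| <= C * (`|d - x n| + `|x n|) by rewrite ler_wpM2l // ltW.
have h6 : C * `|d - x n| < C * e by rewrite ltr_pM2l.
lra.
Qed.

Lemma half_norm (W : normedModType R) (z1 z2 : W) :
  `|2^-1 *: (z1 + z2)| <= (`|z1| + `|z2|) / 2.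
Proof.
rewrite normrZ ger0_norm ?invr_ge0 ?ler0n // mulrC ler_wpM2r ?invr_ge0 ?ler0n //.
exact: ler_normD.
Qed.

Lemma Nn_strict : strictly_convex_fun Nn.
Proof.
move=> u v /eqP uv eN.
set m := 2^-1 *: (u + v).
have eM : M u = M v by rewrite -!NnK eN.
have hm2 : `|m| ^+ 2 <= (`|u| ^+ 2 + `|v| ^+ 2) / 2.
  by apply: midineq => //; exact: half_norm.
have Tm i : T i m = 2^-1 *: (T i u + T i v) by rewrite /m linearZ linearD.
have hTm i : `|T i m| <= (`|T i u| + `|T i v|) / 2 by rewrite Tm; exact: half_norm.
have pw i : w m i <= (w u i + w v i) / 2.
  have k := ler_wpM2r (Dinv_ge0 i) (midineq (normr_ge0 (T i u)) (normr_ge0 (T i v))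
     (normr_ge0 (T i m)) (hTm i)).
  apply: le_trans k _; rewrite /w; lra.
set f := fun i => (w u i + w v i) / 2 - w m i.
have f0 i : 0 <= f i by rewrite /f subr_ge0.
have [k hk] := sepT uv.
have fk : 0 < f k.
  rewrite /f subr_gt0 /w.
  have Dk : 0 < ((2 ^ k.+1)%:R : R)^-1 by rewrite invr_gt0.
  have [ab|ab] := eqVneq `|T k u| `|T k v|.
    have h := sZ (elimN eqP hk) ab.
    rewrite -(Tm k) in h.
    have h2 : `|T k m| ^+ 2 < `|T k u| ^+ 2 by rewrite ltr_pXn2r // ?nnegrE.
    rewrite -ab.
    have h3 := ltr_pM2r Dk (`|T k m| ^+ 2) (`|T k u| ^+ 2).
    rewrite -h3 in h2; lra.
  have h := midineq_lt (normr_ge0 (T k u)) (normr_ge0 (T k v))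
     (normr_ge0 (T k m)) (hTm k) ab.
  have h3 := ltr_pM2r Dk (`|T k m| ^+ 2) ((`|T k u| ^+ 2 + `|T k v| ^+ 2) / 2).
  rewrite -h3 in h; lra.
have s2 : summ (fun i => 2^-1 * (w u i + w v i)).
  by apply: summZ; rewrite ?invr_ge0 ?ler0n //; apply: summD; exact: summ_w.
have sf : summ f.
  apply: summ_le s2 => // i; rewrite /f; have := w_ge0 m i; lra.
have eQ : (Q u + Q v) / 2 = Q m + sumR f.
  have h2 : (0 : R) <= 2^-1 by rewrite invr_ge0 ler0n.
  rewrite /Q -(sumRD (summ_w u) (summ_w v)) mulrC -(sumRZ h2 (summD (summ_w u) (summ_w v))).
  rewrite -(sumRD (summ_w m) sf); congr sumR; apply/funext => i; rewrite /f; lra.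
have hf := sumR_ge k sf.
have hQ : Q m < (Q u + Q v) / 2 by lra.
have hMm : M m < M u by rewrite /M; rewrite /M in eM; lra.
have Mu0 : 0 < M u by apply: le_lt_trans hMm; exact: M_ge0.
by rewrite /Nn ltr_sqrt.
Qed.

End Back.

Unset Implicit Arguments. Set Strict Implicit.

Theorem proposition3p3 (R : realType) (X : completeNormedModType R)
  (G : topologicalType) (mul : G -> G -> G) (one : G) (inv : G -> G)
  (act : G -> X -> X) :
  separable X ->
  is_topological_group mul one inv ->
  is_linear_isometric_action mul one act ->
  continuous_action act ->
  (exists N : X -> R,
      [/\ is_norm N, equivalent_norm N, G_invariant act N & strictly_convex_fun N])
  <->
  (exists (x : nat -> X) (C : R) (Z : nat -> completeNormedModType R)
          (actZ : forall n, G -> Z n -> Z n)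
          (T : forall n, {linear X -> Z n}),
      [/\ dense (range x), 0 < C &
       forall n,
         [/\ strictly_convex_space (Z n),
             is_linear_isometric_action mul one (actZ n),
             (forall g v, T n (act g v) = actZ n g (T n v)),
             (forall v, `|T n v| <= `|v|) &
             C * `|x n| <= `|T n (x n)|]]).
Proof.
move=> sep _ aX _; split; first exact: forward_dir sep aX.
move=> [x [C [Z [actZ [T [dx C0 hn]]]]]].
have sZ : forall n, strictly_convex_space (Z n) by move=> n; case: (hn n).
have aZ : forall n, is_linear_isometric_action mul one (actZ n) by move=> n; case: (hn n).
have eqT : forall n g v, T n (act g v) = actZ n g (T n v) by move=> n; case: (hn n).
have nT : forall n v, `|T n v| <= `|v| by move=> n; case: (hn n).
have cT : forall n, C * `|x n| <= `|T n (x n)| by move=> n; case: (hn n).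
exists (Nn T); split.
- split; [exact: (Nn_eq0 nT) | exact: (NnZ nT) | exact: (Nn_tri nT)].
- exists 1, 2; split; rewrite ?ltr01 ?ltr0n //.
  by move=> v; rewrite mul1r; exact: (Nn_equiv nT).
- by move=> g v; exact: (Nn_act aX aZ eqT).
- exact: (Nn_strict dx C0 sZ nT cT).
Qed.
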